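(* Let $K, L, N, Z$ be positive integers with $Z \ge 2$. Let $\Omega \subseteq \{0,1,\dots,N-1\}$ be arbitrary. Let $\{\mathbf{a}_i\}_{i=1}^K$ be a $(K,L,Z)$ zero-correlation zone (ZCZ) sequence set, where $\mathbf{a}_i=[a^i_0,\dots,a^i_{L-1}]^{\mathrm T}$ and every entry satisfies $|a^i_l|=1$. For $1\le i\le K$ let $\mathbf{B}_i=[B^i_0,\dots,B^i_{N-1}]^{\mathrm T}\in\mathbb{C}^N$ be arbitrary with $B^i_k=0$ for all $k\in\Omega$, let $\mathbf{b}_i=\mathcal{F}_N^{\mathrm H}\mathbf{B}_i$, and define the length-$NL$ sequence $\mathbf{c}_i=\mathbf{a}_i\otimes\mathbf{b}_i$, i.e. the $(lN+n)$-th entry of $\mathbf{c}_i$ is $a^i_l\, b^i_n$ for $0\le l\le L-1$, $0\le n\le N-1$. Then: (1) for all $i\neq j$, $R_{\mathbf{c}_i,\mathbf{c}_j}(\tau)=0$ for all integers $\tau$ with $|\tau|<NZ-N$ (so $\{\mathbf{c}_i\}$ is a $(K,NL,NZ-N)$ quasi-ZCZ sequence set); (2) each $\mathbf{c}_i$ satisfies the spectrum hole constraint $\Omega$, in the sense that for each $0\le l\le L-1$ the $l$-th block $[c^i_{lN},\dots,c^i_{lN+N-1}]^{\mathrm T}=a^i_l\,\mathbf{b}_i$ has $N$-point DFT $a^i_l\mathbf{B}_i$, which vanishes at every position $k\in\Omega$; (3) for each $i$, $$R_{\mathbf{c}_i}(\tau)=\begin{cases} L\cdot C_{\mathbf{b}_i}(\tau),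 & |\tau|<N,\\ 0, & N\le|\tau|<NZ-N.\end{cases}$$
   Context: For length-$M$ complex sequences $\mathbf{x}=[x_0,\dots,x_{M-1}]^{\mathrm T}$, $\mathbf{y}=[y_0,\dots,y_{M-1}]^{\mathrm T}$, the periodic cross-correlation is $R_{\mathbf{x},\mathbf{y}}(\tau)=\sum_{n=0}^{M-1}x_n y^*_{n+\tau}$, with the index $n+\tau$ taken modulo $M$ (defined for all integers $\tau$); $R_{\mathbf{x}}(\tau):=R_{\mathbf{x},\mathbf{x}}(\tau)$. The aperiodic cross-correlation is $C_{\mathbf{x},\mathbf{y}}(\tau)=\sum_{n} x_n y^*_{n+\tau}$, the sum over those $n$ with $0\le n\le M-1$ and $0\le n+\tau\le M-1$ (so for $0\le\tau\le M-1$ it is $\sum_{n=0}^{M-1-\tau}x_ny^*_{n+\tau}$, and for negative $\tau$ it is $\sum_{n=-\tau}^{M-1}x_ny^*_{n+\tau}$); $C_{\mathbf{x}}(\tau):=C_{\mathbf{x},\mathbf{x}}(\tau)$. A set $\{\mathbf{a}_i\}_{i=1}^K$ of length-$L$ sequences is a $(K,L,Z)$ ZCZ sequence set if $R_{\mathbf{a}_i}(\tau)=0$ for all $i$ and all $1\le|\tau|<Z$, and $R_{\mathbf{a}_i,\mathbf{a}_j}(\tau)=0$ for all $i\ne j$ and all $0\le|\tau|<Z$; a set satisfying only the second (cross-correlation) condition is called a $(K,L,Z)$ quasi-ZCZ set. $\mathcal{F}_N=[f_{p,q}]_{p,q=0}^{N-1}$ with $f_{p,q}=\frac{1}{\sqrt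 N}e^{-2\pi\sqrt{-1}\,pq/N}$ is the unitary DFT matrix, and $\mathcal{F}_N^{\mathrm H}$ its conjugate transpose (the IDFT). $\Omega$ is the set of unavailable subcarrier positions (''spectrum hole constraint''). *)

(* Defs.v *)
From HB Require Import structures.
From mathcomp Require Import all_boot all_order all_algebra.
From mathcomp Require Import reals trigo.
From mathcomp.real_closed Require Import complex.
Set Implicit Arguments. Unset Strict Implicit. Unset Printing Implicit Defensive.
Import Order.TTheory GRing.Theory Num.Theory.
Local Open Scope ring_scope.
Local Open Scope complex_scope.

Section Defs.
Variable R : realType.
Local Notation C := R[i].

(* A length-M sequence is a function nat -> C; only indices 0..M-1 matter. *)

Definition percorr (M : nat) (x y : nat -> C) (tau : int) : C :=
  \sum_(n < M) x n * (y (absz ((n%:Z + tau) %% M%:Z)%Z))^*.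

Definition apercorr (M : nat) (x y : nat -> C) (tau : int) : C :=
  \sum_(n < M | (0 <= n%:Z + tau) && (n%:Z + tau < M%:Z))
     x n * (y (absz (n%:Z + tau)))^*.

Definition ZCZ_set (K L Z : nat) (a : 'I_K -> nat -> C) : Prop :=
  (forall i (tau : int), (1 <= absz tau)%N -> (absz tau < Z)%N ->
      percorr L (a i) (a i) tau = 0) /\
  (forall i j (tau : int), i != j -> (absz tau < Z)%N ->
      percorr L (a i) (a j) tau = 0).

Definition quasi_ZCZ_set (K L Z : nat) (a : 'I_K -> nat -> C) : Prop :=
  forall i j (tau : int), i != j -> (absz tau < Z)%N ->
      percorr L (a i) (a j) tau = 0.

Definition expi (t : R) : C := (cos t) +i* (sin t).

Definition dftmx (N p q : nat) : C :=
  ((Num.sqrt (N%:R : R))%:C)^-1 *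
  expi (- (2 * pi * (p * q)%:R / N%:R)).

Definition dft (N : nat) (x : nat -> C) (p : nat) : C :=
  \sum_(q < N) dftmx N p q * x q.

(* IDFT: (F_N^H X)_p, entry (p,q) of F_N^H is conj(f_{q,p}) *)
Definition idft (N : nat) (X : nat -> C) (p : nat) : C :=
  \sum_(q < N) (dftmx N q p)^* * X q.

Definition kron (N : nat) (a b : nat -> C) (m : nat) : C :=
  a (m %/ N)%N * b (m %% N)%N.

End Defs.

(* Main.v *)
Require Import Defs.
From HB Require Import structures.
From mathcomp Require Import all_boot all_order all_algebra.
From mathcomp Require Import reals trigo.
From mathcomp.real_closed Require Import complex.
From mathcomp Require Import zify ring lra.
Import Order.TTheory GRing.Theory Num.Theory.
Local Open Scope ring_scope.
Local Open Scope complex_scope.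
Section S.
Variable R : realType.
Local Notation C := R[i].

Lemma expiD (x y : R) : expi (x + y) = expi x * expi y.
Proof. rewrite /expi cosD sinD /=. congr (_ +i* _); ring. Qed.

Lemma expiJ (x : R) : Num.conj (expi x) = expi (- x) :> C.
Proof. by rewrite /expi cosN sinN. Qed.

Lemma expi0 : expi 0 = 1 :> C.
Proof. by rewrite /expi cos0 sin0. Qed.

Lemma expiX (x : R) n : expi (x * n%:R) = expi x ^+ n.
Proof.
elim: n => [|n IH]; first by rewrite mulr0 expi0.
by rewrite -addn1 natrD mulrDr mulr1 expiD IH addn1 exprSr.
Qed.

Lemma expi2pi (m : nat) : expi (2 * pi * m%:R) = 1 :> C.
Proof.
rewrite expiX.
have -> : expi (2 * pi) = 1 :> C.
  by rewrite /expi mulr_natl cos2pi sin2pi.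
by rewrite expr1n.
Qed.
Lemma expi_neq1 (N d : nat) : (0 < d)%N -> (d < N)%N ->
  expi (2 * pi * d%:R / N%:R) != 1 :> C.
Proof.
move=> d0 dN; apply/eqP => /(congr1 (@complex.Re R)) /= Hc.
set h : R := pi * d%:R / N%:R.
have hx : 2 * pi * d%:R / N%:R = h *+ 2 by rewrite /h -mulr_natl; ring.
rewrite hx cos_mulr2n in Hc.
have N0 : (0 : R) < N%:R by rewrite ltr0n; lia.
have hpos : 0 < h < pi.
  apply/andP; split.
    by rewrite /h mulr_gt0 ?invr_gt0 // mulr_gt0 ?pi_gt0 // ltr0n.
  rewrite /h ltr_pdivrMr // ltr_pM2l ?pi_gt0 // ltr_nat //.
have := sin_gt0_pi hpos.
have := cos2Dsin2 h.
have : cos h ^+ 2 = 1 by move: Hc; rewrite mulr2n; lra.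
move=> ->. move=> H1 H2.
have : sin h ^+ 2 = 0 by lra.
move/eqP; rewrite expf_eq0 /= => /eqP s0. by rewrite s0 ltxx in H2.
Qed.
Lemma geo0 (y : R) (N : nat) : expi y != 1 :> C -> expi (y * N%:R) = 1 :> C ->
  \sum_(q < N) expi (y * q%:R) = 0 :> C.
Proof.
move=> ne1 eN.
have := subrX1 (expi y) N.
rewrite -expiX eN subrr => /esym /eqP; rewrite mulf_eq0 subr_eq0 (negbTE ne1) /=.
move/eqP => S0; rewrite -[RHS]S0; apply: eq_bigr => q _; by rewrite expiX.
Qed.

Lemma geo0d (N d : nat) : (0 < d)%N -> (d < N)%N ->
  \sum_(q < N) expi ((2 * pi * d%:R / N%:R) * q%:R) = 0 :> C /\
  \sum_(q < N) expi (- (2 * pi * d%:R / N%:R) * q%:R) = 0 :> C.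
Proof.
move=> d0 dN.
have N0 : (N%:R : R) != 0 by rewrite pnatr_eq0; lia.
have e1 := @expi_neq1 N d d0 dN.
have eN : expi (2 * pi * d%:R / N%:R * N%:R) = 1 :> C by rewrite divfK // expi2pi.
split; apply: geo0 => //.
  by apply: contra e1 => /eqP H; rewrite -[expi _]conjCK expiJ H conjC1.
by rewrite mulNr -expiJ eN conjC1.
Qed.

Lemma realcM (x y : R) : (x * y)%:C = x%:C * y%:C :> C.
Proof. apply/eqP; rewrite eq_complex /=; apply/andP; split; apply/eqP; ring. Qed.

Lemma realc_nat (n : nat) : (n%:R : R)%:C = n%:R :> C.
Proof.
elim: n => [//|n IH]. rewrite -addn1 !natrD -IH.
apply/eqP; rewrite eq_complex /=; apply/andP; split; apply/eqP; ring.
Qed.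
Lemma conjE (x : C) : Num.conj x = conjc x.
Proof. reflexivity. Qed.
Lemma conjM (x y : C) : Num.conj (x * y) = Num.conj x * Num.conj y.
Proof. exact: rmorphM. Qed.
Lemma conjVr (x : R) : Num.conj ((x%:C)^-1) = (x%:C)^-1 :> C.
Proof. rewrite conjE conjc_inv. by rewrite conjc_real. Qed.

Lemma dft_orth (N k p : nat) : (0 < N)%N -> (k < N)%N -> (p < N)%N ->
  \sum_(q < N) dftmx R N k q * (dftmx R N p q)^* = (k == p)%:R :> C.
Proof.
move=> N0 kN pN.
have N0' : (N%:R : R) != 0 by rewrite pnatr_eq0; lia.
have NC : (N%:R : C) != 0 by rewrite pnatr_eq0; lia.
have ss : ((Num.sqrt (N%:R : R))%:C)^-1 * ((Num.sqrt (N%:R : R))%:C)^-1 = (N%:R : C)^-1.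
  by rewrite -invfM -realcM -expr2 sqr_sqrtr ?ler0n // realc_nat.
rewrite (eq_bigr (fun q : 'I_N => (N%:R : C)^-1 *
   expi (2 * pi * (p * q)%:R / N%:R - 2 * pi * (k * q)%:R / N%:R))); last first.
  move=> q _; rewrite /dftmx conjM conjVr expiJ opprK.
  rewrite -ss addrC expiD; ring.
rewrite -mulr_sumr.
case: (ltngtP k p) => hkp.
- have := (@geo0d N (p - k)%N ltac:(lia) ltac:(lia)).1.
  move=> H; rewrite (eq_bigr (fun q : 'I_N => expi ((2*pi*(p-k)%:R/N%:R) * q%:R))); last first.
    move=> q _; congr expi.
    rewrite !natrM natrB ?(ltnW hkp) //; field; done.
  by rewrite H mulr0.
- have := (@geo0d N (k - p)%N ltac:(lia) ltac:(lia)).2.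
  move=> H; rewrite (eq_bigr (fun q : 'I_N => expi (-(2*pi*(k-p)%:R/N%:R) * q%:R))); last first.
    move=> q _; congr expi.
    rewrite !natrM natrB ?(ltnW hkp) //; field; done.
  by rewrite H mulr0.
- subst k.
  rewrite (eq_bigr (fun _ => 1)); last by move=> q _; rewrite subrr expi0.
  by rewrite sumr_const card_ord mulVf.
Qed.
Lemma dft_idft (N : nat) (X : nat -> C) (k : nat) : (0 < N)%N -> (k < N)%N ->
  dft N (idft N X) k = X k.
Proof.
move=> N0 kN; rewrite /dft /idft.
rewrite (eq_bigr (fun q : 'I_N => \sum_(p < N) dftmx R N k q * Num.conj (dftmx R N p q) * X p)); last first.
  by move=> q _; rewrite mulr_sumr; apply: eq_bigr => p _; rewrite mulrA.
rewrite exchange_big /=.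
rewrite (eq_bigr (fun p : 'I_N => (k == p)%:R * X p)); last first.
  by move=> p _; rewrite -mulr_suml dft_orth.
rewrite (bigD1 (Ordinal kN)) //= eqxx mul1r big1 ?addr0 //.
move=> p /eqP hp; case: eqP => [h|_]; last by rewrite mul0r.
by exfalso; apply: hp; apply: val_inj.
Qed.
End S.
Lemma modz_block (N L : nat) (t e : int) : (0 < N)%N -> (0 < L)%N -> 0 <= e -> e < N%:Z ->
  ((t * N%:Z + e) %% (N * L)%:Z)%Z = ((t %% L%:Z)%Z * N%:Z + e).
Proof.
move=> N0 L0 e0 eN.
have hs : 0 <= (t %% L%:Z)%Z < L%:Z by apply/andP; split; lia.
rewrite {1}(divz_eq t L%:Z).
have -> : ((t %/ L%:Z)%Z * L%:Z + (t %% L%:Z)%Z) * N%:Z + e =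
   (t %/ L%:Z)%Z * (N * L)%:Z + ((t %% L%:Z)%Z * N%:Z + e) by rewrite PoszM; ring.
rewrite modzMDl modz_small //.
move: hs => /andP [h1 h2]; apply/andP; split.
  nia.
rewrite PoszM. nia.
Qed.

Lemma idx_eq (N L l n : nat) (tau : int) (t : int) (e : nat) : (0 < N)%N -> (0 < L)%N ->
  (e < N)%N -> ((l * N + n)%N%:Z + tau = t * N%:Z + e%:Z) ->
  absz (((l * N + n)%N%:Z + tau) %% (N * L)%:Z)%Z = (absz (t %% L%:Z)%Z * N + e)%N.
Proof.
move=> N0 L0 eN ->.
have hs : 0 <= (t %% L%:Z)%Z by lia.
rewrite modz_block //; lia.
Qed.
Section S2. Variable R : realType. Local Notation C := R[i].
Lemma sum_split (F : nat -> C) N L : \sum_(m < N*L) F m = \sum_(l < L) \sum_(n < N) F (l*N+n)%N.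
Proof.
elim: L => [|L IH]; first by rewrite muln0 !big_ord0.
rewrite big_ord_recr /= -IH.
have -> : (N * L.+1 = N*L + N)%N by lia.
rewrite big_split_ord /=; congr (_ + _); apply: eq_bigr => n _; congr F; lia.
Qed.

Lemma term_eq N L (x u y w : nat -> C) (tau : int) (l n : nat) :
  (0 < N)%N -> (0 < L)%N -> (n < N)%N ->
  kron N x u (l*N+n)%N * Num.conj (kron N y w (absz (((l*N+n)%N%:Z + tau) %% (N*L)%:Z)%Z)) =
  if (n + absz (tau %% N%:Z)%Z < N)%N then
    (x l * Num.conj (y (absz ((l%:Z + (tau %/ N%:Z)%Z) %% L%:Z)%Z))) *
    (u n * Num.conj (w (n + absz (tau %% N%:Z)%Z)%N))
  else
    (x l * Num.conj (y (absz ((l%:Z + ((tau %/ N%:Z)%Z + 1)) %% L%:Z)%Z))) *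
    (u n * Num.conj (w (n + absz (tau %% N%:Z)%Z - N)%N)).
Proof.
move=> N0 L0 nN.
have hdiv : ((l * N + n) %/ N = l)%N by rewrite divnMDl // divn_small // addn0.
have hmod : ((l * N + n) %% N = n)%N by rewrite modnMDl modn_small.
rewrite /kron hdiv hmod conjM.
have htau := divz_eq tau N%:Z.
have hr : 0 <= (tau %% N%:Z)%Z < N%:Z.
  by rewrite modz_ge0 ?ltz_pmod //; lia.
set q := (tau %/ N%:Z)%Z in htau *.
set r := (tau %% N%:Z)%Z in htau hr *.
case: ifP => hnr.
- rewrite (@idx_eq N L l n tau (l%:Z + q) (n + absz r) N0 L0 hnr); last by nia.
  rewrite divnMDl // divn_small // addn0 modnMDl modn_small //.
  ring.
- have hnr' : (n + absz r - N < N)%N by lia.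
  rewrite (@idx_eq N L l n tau (l%:Z + (q + 1)) (n + absz r - N) N0 L0 hnr'); last by nia.
  rewrite divnMDl // divn_small // addn0 modnMDl modn_small //.
  ring.
Qed.
Lemma percorr_kron N L (x y u w : nat -> C) (tau : int) :
  (0 < N)%N -> (0 < L)%N ->
  percorr (N*L) (kron N x u) (kron N y w) tau =
   percorr L x y (tau %/ N%:Z)%Z *
     \sum_(n < N | (n + absz (tau %% N%:Z)%Z < N)%N) u n * Num.conj (w (n + absz (tau %% N%:Z)%Z)%N)
 + percorr L x y ((tau %/ N%:Z)%Z + 1) *
     \sum_(n < N | ~~ (n + absz (tau %% N%:Z)%Z < N)%N) u n * Num.conj (w (n + absz (tau %% N%:Z)%Z - N)%N).
Proof.
move=> N0 L0.
rewrite /percorr (sum_split (fun m => kron N x u m * Num.conj (kron N y w (absz ((m%:Z + tau) %% (N*L)%:Z)%Z)))).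
rewrite !mulr_suml -big_split /=; apply: eq_bigr => l _.
rewrite !mulr_sumr.
under eq_bigr => n _ do rewrite (@term_eq N L x u y w tau l n N0 L0 (ltn_ord n)).
rewrite (bigID (fun n : 'I_N => (n + absz (tau %% N%:Z)%Z < N)%N)) /=.
congr (_ + _); apply: eq_bigr => n hn; by rewrite ?hn ?(negbTE hn).
Qed.
End S2.
Lemma qbounds N Z (tau : int) : (0 < N)%N -> (absz tau < N * Z - N)%N ->
  (absz (tau %/ N%:Z)%Z < Z)%N /\ (absz ((tau %/ N%:Z)%Z + 1)%R < Z)%N.
Proof.
move=> N0 hz.
have htau := divz_eq tau N%:Z.
have hr : 0 <= (tau %% N%:Z)%Z < N%:Z.
  by rewrite modz_ge0 ?ltz_pmod //; lia.
set q := (tau %/ N%:Z)%Z in htau *.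
set r := (tau %% N%:Z)%Z in htau hr *.
move: hr => /andP [hr1 hr2].
have hz' : `|tau| < (N * Z - N)%N%:Z by lia.
split; nia.
Qed.

Theorem theorem1 (R : realType) (K L N Z : nat)
  (Omega : pred nat) (a : 'I_K -> nat -> R[i]) (B : 'I_K -> nat -> R[i]) :
  (0 < K)%N -> (0 < L)%N -> (0 < N)%N -> (2 <= Z)%N ->
  (forall k, Omega k -> (k < N)%N) ->
  ZCZ_set L Z a ->
  (forall i (l : nat), (l < L)%N -> `|a i l| = 1) ->
  (forall i (k : nat), Omega k -> B i k = 0) ->
  let b := fun i => idft N (B i) in
  let c := fun i => kron N (a i) (b i) in
  (* (1) *)
  (forall i j (tau : int), i != j -> (absz tau < N * Z - N)%N ->
      percorr (N * L) (c i) (c j) tau = 0)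
  /\ quasi_ZCZ_set (N * L) (N * Z - N) c
  (* (2) *)
  /\ (forall i (l : nat), (l < L)%N ->
        (forall k : nat, (k < N)%N ->
           dft N (fun n => c i (l * N + n)%N) k = a i l * B i k)
        /\ (forall k : nat, Omega k ->
           dft N (fun n => c i (l * N + n)%N) k = 0))
  (* (3) *)
  /\ (forall i (tau : int),
        ((absz tau < N)%N ->
           percorr (N * L) (c i) (c i) tau = L%:R * apercorr N (b i) (b i) tau)
        /\ ((N <= absz tau)%N -> (absz tau < N * Z - N)%N ->
           percorr (N * L) (c i) (c i) tau = 0)).
Proof.
move=> K0 L0 N0 Z2 hOm [hauto hcross] ha hB b c.
have part1 : forall i j (tau : int), i != j -> (absz tau < N * Z - N)%N ->
      percorr (N * L) (c i) (c j) tau = 0.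
  move=> i j tau hij hz.
  have [hq1 hq2] := @qbounds N Z tau N0 hz.
  by rewrite /c percorr_kron // hcross // hcross // !mul0r addr0.
split; first exact: part1.
split; first exact: part1.
split.
  move=> i l lL.
  have hd : forall k : nat, (k < N)%N -> dft N (fun n => c i (l * N + n)%N) k = a i l * B i k.
    move=> k kN.
    rewrite -(@dft_idft R N (B i) k N0 kN) /dft mulr_sumr.
    apply: eq_bigr => n _.
    rewrite /c /kron /b.
    have hdiv : ((l * N + n) %/ N = l)%N by rewrite divnMDl // divn_small // addn0.
    have hmod : ((l * N + n) %% N = n)%N by rewrite modnMDl modn_small.
    rewrite hdiv hmod; ring.
  split; first exact: hd.
  move=> k hk; rewrite hd; last exact: hOm.
  by rewrite hB // mulr0.
move=> i tau.
have R0 : percorr L (a i) (a i) 0 = L%:R.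
  rewrite /percorr (eq_bigr (fun _ => 1)) ?sumr_const ?card_ord //.
  move=> l _; have lL := ltn_ord l; rewrite addr0 modz_small; last by apply/andP; split; lia.
  by rewrite /= conjE -sqr_normc ha // expr1n.
have htau := divz_eq tau N%:Z.
have hr : 0 <= (tau %% N%:Z)%Z < N%:Z.
  by rewrite modz_ge0 ?ltz_pmod //; lia.
split.
  move=> htN.
  rewrite /c percorr_kron //.
  case: (lerP 0 tau) => ht.
  - have q0 : (tau %/ N%:Z)%Z = 0 by rewrite divz_small //; apply/andP; split; lia.
    have r0 : (tau %% N%:Z)%Z = tau by rewrite modz_small //; apply/andP; split; lia.
    rewrite q0 r0 add0r R0 (hauto _ 1) // mul0r addr0; congr (_ * _).
    rewrite /apercorr; apply: eq_big => n.
      apply/idP/idP; [move=> h; apply/andP; split; lia | move=> /andP [h1 h2]; lia].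
    move=> _; congr (_ * Num.conj (b i _)); lia.
  - have r0 : (tau %% N%:Z)%Z = tau + N%:Z.
      by rewrite -(modzDr tau N%:Z) modz_small //; apply/andP; split; lia.
    have q0 : (tau %/ N%:Z)%Z = -1.
      rewrite r0 in htau. nia.
    rewrite q0 r0 addNr R0 (hauto _ (-1)) // mul0r add0r; congr (_ * _).
    rewrite /apercorr; apply: eq_big => n.
      have := ltn_ord n.
      move=> hn; apply/idP/idP; [move=> h; apply/andP; split; lia | move=> /andP [h1 h2]; lia].
    move=> hp; rewrite -leqNgt in hp; have hn := ltn_ord n; congr (_ * Num.conj (b i _)); lia.
move=> h1 h2.
have [hq1 hq2] := @qbounds N Z tau N0 h2.
rewrite /c percorr_kron //.
move: hr => /andP [hr1 hr2].
set q := (tau %/ N%:Z)%Z in htau hq1 hq2 *.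
set r := (tau %% N%:Z)%Z in htau hr1 hr2 *.
have qn0 : (0 < absz q)%N.
  case: (eqVneq q 0) => hq; last by lia.
  rewrite hq mul0r add0r in htau; lia.
rewrite (hauto _ q) // mul0r add0r.
have [hq0|hq0] := eqVneq (q + 1) 0.
- rewrite big1 ?mulr0 //.
  move=> n hn; exfalso; have := ltn_ord n.
  have hqm : q = -1 by lia.
  rewrite hqm in htau.
  have r0 : r = 0 by lia.
  move: hn; rewrite r0 /=; lia.
- by rewrite (hauto _ (q + 1)) ?mul0r //; lia.
Qed.
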